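(* Let $\mu$ be a distribution on $\Sigma\times\Gamma$ (finite sets) and $t:\mathsf{supp}(\mu)\to\mathbb{Z}_m$, defining a two-player $\mathsf{XOR}$ game $\mathcal{G}$ that is connected and has value less than $1$. Let $T(x,y)=\omega^{-t(x,y)}$ with $\omega=e^{2\pi i/m}$. Then there is a constant $c=c(\mathcal{G},\mu)>0$ such that for all $n$ and all $F:\Sigma^n\to\mathbb{D}$, $G:\Gamma^n\to\mathbb{D}$, $$\left|\mathbb{E}_{(x,y)\sim\mu^{\otimes n}}\Big[F(x)G(y)\prod_{i=1}^nT(x_i,y_i)\Big]\right|\le 2^{-cn}.$$
   Context: $\mathbb{D}$ is the closed unit disk in $\mathbb{C}$. The game is connected if the bipartite graph on vertex set $\Sigma\sqcup\Gamma$ with edge set $\mathsf{supp}(\mu)$ is connected. The value of the game is $\max_{f:\Sigma\to\mathbb{Z}_m,\,g:\Gamma\to\mathbb{Z}_m}\Pr_{(x,y)\sim\mu}[f(x)+g(y)=t(x,y)]$. *)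

(* Defs.v *)
From mathcomp Require Import all_boot all_order all_algebra.
From mathcomp Require Import all_classical all_reals all_analysis.
From mathcomp.real_closed Require Import complex.
Set Implicit Arguments.
Unset Strict Implicit.
Unset Printing Implicit Defensive.
Import Order.TTheory GRing.Theory Num.Theory.
Local Open Scope ring_scope.
Local Open Scope complex_scope.

Section XorGame.
Variables (R : realType) (Sigma Gamma : finType) (m : nat).

Definition is_distr (mu : Sigma -> Gamma -> R) : Prop :=
  (forall x y, 0 <= mu x y) /\ \sum_(x : Sigma) \sum_(y : Gamma) mu x y = 1.

Definition supp_graph (mu : Sigma -> Gamma -> R) : rel (Sigma + Gamma) :=
  fun u v => match u, v with
             | inl x, inr y => 0 < mu x y
             | inr y, inl x => 0 < mu x y
             | _, _ => false
             end.

Definition game_connected (mu : Sigma -> Gamma -> R) : Prop :=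
  forall u v : Sigma + Gamma, connect (supp_graph mu) u v.

Definition win_prob (mu : Sigma -> Gamma -> R) (t : Sigma -> Gamma -> 'Z_m)
  (f : {ffun Sigma -> 'Z_m}) (g : {ffun Gamma -> 'Z_m}) : R :=
  \sum_(x : Sigma) \sum_(y : Gamma | f x + g y == t x y) mu x y.

(* value of the game: max over all strategies f, g (the max of a finite
   nonempty family of nonnegative reals, so the 0 seed is harmless) *)
Definition game_value (mu : Sigma -> Gamma -> R) (t : Sigma -> Gamma -> 'Z_m) : R :=
  \big[Num.max/0]_(f : {ffun Sigma -> 'Z_m})
    \big[Num.max/0]_(g : {ffun Gamma -> 'Z_m}) win_prob mu t f g.

Definition omega : R[i] := cos (pi *+ 2 / m%:R) +i* sin (pi *+ 2 / m%:R).

Definition Tchar (t : Sigma -> Gamma -> 'Z_m) (x : Sigma) (y : Gamma) : R[i] :=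
  omega ^- (val (t x y)).

Definition xor_correlation (mu : Sigma -> Gamma -> R) (t : Sigma -> Gamma -> 'Z_m)
  (n : nat) (F : {ffun 'I_n -> Sigma} -> R[i]) (G : {ffun 'I_n -> Gamma} -> R[i]) : R[i] :=
  \sum_(x : {ffun 'I_n -> Sigma}) \sum_(y : {ffun 'I_n -> Gamma})
     (\prod_(i < n) mu (x i) (y i))%:C * F x * G y * \prod_(i < n) Tchar t (x i) (y i).

End XorGame.

(* Main.v *)
Require Import Defs.
From mathcomp Require Import all_boot all_order all_algebra.
From mathcomp Require Import all_classical all_reals all_analysis.
From mathcomp.real_closed Require Import complex.
From mathcomp Require Import lra ring.
Import Order.TTheory GRing.Theory Num.Theory.
Local Open Scope ring_scope.
Local Open Scope complex_scope.

Notation Rc := complex.Re.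
Notation Ic := complex.Im.
Definition sq {R : realType} (z : R[i]) : R := Rc z ^+ 2 + Ic z ^+ 2.

Lemma sqM (R : realType) (z w : R[i]) : sq (z * w) = sq z * sq w.
Proof. case: z => a b; case: w => c d; rewrite /sq /=. ring. Qed.
Lemma ReD (R : realType) (z w : R[i]) : Rc (z + w) = Rc z + Rc w.
Proof. by case: z => a b; case: w => c d. Qed.
Lemma ReM (R : realType) (z w : R[i]) : Rc (z * w) = Rc z * Rc w - Ic z * Ic w.
Proof. by case: z => a b; case: w => c d. Qed.
Lemma ReCM (R : realType) (a : R) (z : R[i]) : Rc (a%:C * z) = a * Rc z.
Proof. by case: z => c d /=; rewrite mul0r subr0. Qed.
Lemma sq_ge0 (R : realType) (z : R[i]) : 0 <= sq z.
Proof. by rewrite /sq addr_ge0 // sqr_ge0. Qed.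
Lemma sqC (R : realType) (a : R) : sq (a%:C) = a ^+ 2.
Proof. by rewrite /sq /= expr0n /= addr0. Qed.
Lemma sq0 (R : realType) : sq (0 : R[i]) = 0.
Proof. by rewrite /sq /= expr0n /= addr0. Qed.
Lemma sqN (R : realType) (z : R[i]) : sq (- z) = sq z.
Proof. by case: z => a b; rewrite /sq /= !sqrrN. Qed.
Lemma sqD2 (R : realType) (z w : R[i]) : sq (z + w) <= 2 * sq z + 2 * sq w.
Proof.
case: z => a b; case: w => c d; rewrite /sq /= -subr_ge0.
have -> : 2 * (a ^+ 2 + b ^+ 2) + 2 * (c ^+ 2 + d ^+ 2) - ((a + c) ^+ 2 + (b + d) ^+ 2)
  = (a - c) ^+ 2 + (b - d) ^+ 2 by ring.
by rewrite addr_ge0 // sqr_ge0.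
Qed.
Lemma sqD3 (R : realType) (z w u : R[i]) :
  sq (z + w + u) <= 3 * (sq z + sq w + sq u).
Proof.
case: z => a b; case: w => c d; case: u => e f; rewrite /sq /= -subr_ge0.
have -> : 3 * (a ^+ 2 + b ^+ 2 + (c ^+ 2 + d ^+ 2) + (e ^+ 2 + f ^+ 2)) -
  ((a + c + e) ^+ 2 + (b + d + f) ^+ 2) =
  (a - c) ^+ 2 + (a - e) ^+ 2 + (c - e) ^+ 2 + ((b - d) ^+ 2 + (b - f) ^+ 2 + (d - f) ^+ 2)
  by ring.
by rewrite !addr_ge0 // sqr_ge0.
Qed.
Lemma mulcJ_sq (R : realType) (z : R[i]) : z * conjc z = (sq z)%:C.
Proof. case: z => a b; rewrite /sq /=; congr (_ +i* _); ring. Qed.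
Lemma sq_conj (R : realType) (z : R[i]) : sq (conjc z) = sq z.
Proof. by case: z => a b; rewrite /sq /= sqrrN. Qed.
Lemma sqB_expand (R : realType) (u v : R[i]) :
  sq (u - v) = sq u + sq v - 2 * Rc (u * conjc v).
Proof. case: u => a b; case: v => c d; rewrite /sq /=; ring. Qed.
Lemma Re_le (R : realType) (l : R) (u v : R[i]) : 0 < l ->
  2 * l * Rc (u * v) <= l ^+ 2 * sq u + sq v.
Proof.
move=> l0; case: u => a b; case: v => c d; rewrite /sq /= -subr_ge0.
have -> : l ^+ 2 * (a ^+ 2 + b ^+ 2) + (c ^+ 2 + d ^+ 2) - 2 * l * (a * c - b * d)
  = (l * a - c) ^+ 2 + (l * b + d) ^+ 2 by ring.
by rewrite addr_ge0 // sqr_ge0.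
Qed.
Lemma Re_sum (R : realType) (I : Type) (r : seq I) (P : pred I) (F : I -> R[i]) :
  Rc (\sum_(i <- r | P i) F i) = \sum_(i <- r | P i) Rc (F i).
Proof. by elim/big_rec2: _ => // i x y _ <-; rewrite ReD. Qed.
Lemma Re_le_sq (R : realType) (z : R[i]) : Rc z ^+ 2 <= sq z.
Proof. by rewrite /sq lerDl sqr_ge0. Qed.

Lemma disc (R : realType) (S A B : R) : 0 <= S -> 0 <= A -> 0 <= B ->
  (forall l, 0 < l -> 2 * l * S <= l ^+ 2 * S * A + B) -> S <= A * B.
Proof.
move=> S0 A0 B0 H.
have [A0'|Apos] := eqVneq A 0.
  subst A; rewrite mul0r.
  have [->//|Sp] := eqVneq S 0.
  have Sp' : 0 < S by rewrite lt_def Sp S0.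
  have := H ((B + 1) / S); rewrite divr_gt0 ?ltr_wpDl //= => /(_ isT).
  rewrite mulr0 add0r -mulrA divfK //; lra.
have Ap : 0 < A by rewrite lt_def Apos A0.
have := H A^-1; rewrite invr_gt0 Ap => /(_ isT).
have -> : A^-1 ^+ 2 * S * A = S / A by field.
have -> : 2 / A * S = 2 * (S / A) by field.
move=> h; have : S / A <= B by lra.
by rewrite ler_pdivrMr // mulrC.
Qed.

Lemma CS (R : realType) (I : finType) (w : I -> R) (a b : I -> R[i]) :
  (forall i, 0 <= w i) ->
  sq (\sum_i (w i)%:C * a i * b i) <= (\sum_i w i * sq (a i)) * (\sum_i w i * sq (b i)).
Proof.
move=> w0; set S := \sum_i _.
apply: disc; first exact: sq_ge0.
- by apply: sumr_ge0 => i _; rewrite mulr_ge0 ?sq_ge0.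
- by apply: sumr_ge0 => i _; rewrite mulr_ge0 ?sq_ge0.
move=> l l0.
have eS : sq S = \sum_i w i * Rc (conjc S * a i * b i).
  have -> : sq S = Rc (conjc S * S) by rewrite mulrC mulcJ_sq.
  rewrite {2}/S mulr_sumr Re_sum; apply: eq_bigr => i _.
  by rewrite -ReCM; congr Rc; ring.
rewrite {1}eS mulr_sumr -mulrA mulr_sumr mulr_sumr -big_split /=.
apply: ler_sum => i _.
have h := @Re_le R l (conjc S * a i) (b i) l0; rewrite sqM sq_conj in h.
have -> : 2 * l * (w i * Rc (conjc S * a i * b i)) =
  w i * (2 * l * Rc (conjc S * a i * b i)) by ring.
have -> : l ^+ 2 * (sq S * (w i * sq (a i))) + w i * sq (b i) =
  w i * (l ^+ 2 * (sq S * sq (a i)) + sq (b i)) by ring.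
by rewrite ler_wpM2l.
Qed.
Lemma demoivre (R : realType) (th : R) (n : nat) :
  (cos th +i* sin th) ^+ n = cos (n%:R * th) +i* sin (n%:R * th).
Proof.
elim: n => [|n IH]; first by rewrite expr0 mul0r cos0 sin0.
rewrite exprS IH /= -natr1 mulrDl mul1r addrC cosD sinD.
by congr (_ +i* _); ring.
Qed.

Lemma omega_m (R : realType) (m : nat) : (0 < m)%N -> omega R m ^+ m = 1.
Proof.
move=> m0; rewrite /omega demoivre mulrCA mulfV ?mulr1 ?pnatr_eq0 -?lt0n //.
by rewrite cos2pi sin2pi.
Qed.

Lemma omega_neq1 (R : realType) (m j : nat) : (0 < j < m)%N -> omega R m ^+ j != 1.
Proof.
case/andP=> j0 jm; rewrite /omega demoivre; apply/negP => /eqP [] hc hs.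
have m0 : (0 < m%:R :> R) by rewrite ltr0n (ltn_trans j0 jm).
set th := j%:R * (pi *+ 2 / m%:R) in hc hs.
have th0 : 0 < th by rewrite mulr_gt0 ?ltr0n // divr_gt0 // mulrn_wgt0 // pi_gt0.
have th2 : th < pi *+ 2.
  rewrite /th mulrA ltr_pdivrMr // mulrC ltr_pM2l ?ltr_nat //.
  by rewrite mulrn_wgt0 // pi_gt0.
have [hlt|hgt|heq] := ltgtP th pi.
- by move: (@sin_gt0_pi R th); rewrite th0 hlt => /(_ isT); rewrite hs ltxx.
- have := @sin_gt0_pi R (th - pi); rewrite subr_gt0 hgt ltrBlDr -mulr2n th2 /=.
  move=> /(_ isT) h1.
  have h2 : sin (th - pi) = 0 by apply/eqP; rewrite -oppr_eq0 -sinDpi subrK hs.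
  by rewrite h2 ltxx in h1.
- by move: hc; rewrite heq cospi => h; lra.
Qed.

Definition wz (R : realType) (m : nat) (a : 'Z_m) : R[i] := omega R m ^+ (val a).
Arguments wz R {m} a.

Lemma omega_mod (R : realType) (m p : nat) : (0 < m)%N ->
  omega R m ^+ (p %% m) = omega R m ^+ p.
Proof.
by move=> m0; rewrite {2}(divn_eq p m) exprD mulnC exprM omega_m // expr1n mul1r.
Qed.

Lemma wzD (R : realType) (m : nat) (a b : 'Z_m) : (1 < m)%N ->
  wz R (a + b) = wz R a * wz R b.
Proof.
move=> m1; rewrite /wz /=.
have h : forall p, omega R m ^+ (p %% (Zp_trunc m).+2) = omega R m ^+ p.
  by move=> p; rewrite Zp_cast // omega_mod //; exact: ltnW.
by rewrite h exprD.
Qed.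

Lemma wz0 (R : realType) (m : nat) : wz R (0 : 'Z_m) = 1.
Proof. by rewrite /wz expr0. Qed.

Lemma wzN (R : realType) (m : nat) (a : 'Z_m) : (1 < m)%N ->
  wz R (- a) * wz R a = 1.
Proof. by move=> m1; rewrite -wzD // addNr wz0. Qed.

Lemma wz_neq0 (R : realType) (m : nat) (a : 'Z_m) : (1 < m)%N -> wz R a != 0.
Proof.
move=> m1; apply/negP => /eqP h; have := @wzN R m a m1.
by rewrite h mulr0 => /eqP; rewrite eq_sym oner_eq0.
Qed.

Lemma Tchar_wz (R : realType) (Sigma Gamma : finType) (m : nat)
  (t : Sigma -> Gamma -> 'Z_m) x y : (1 < m)%N ->
  Tchar R t x y = wz R (- t x y).
Proof.
move=> m1; rewrite /Tchar -/(wz R (t x y)).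
by rewrite -[RHS]mulr1 -(mulfV (@wz_neq0 R m (t x y) m1)) mulrA wzN // mul1r.
Qed.

Lemma sq_omega (R : realType) (m : nat) : sq (omega R m) = 1.
Proof. by rewrite /sq /omega /= cos2Dsin2. Qed.

Lemma sqX (R : realType) (z : R[i]) n : sq (z ^+ n) = sq z ^+ n.
Proof.
elim: n => [|n IH]; first by rewrite !expr0 /sq /= expr0n /= addr0 expr1n.
by rewrite !exprS sqM IH.
Qed.

Lemma sq_wz (R : realType) (m : nat) (a : 'Z_m) : sq (wz R a) = 1.
Proof. by rewrite /wz sqX sq_omega expr1n. Qed.

Lemma conj_wz (R : realType) (m : nat) (a : 'Z_m) : (1 < m)%N ->
  conjc (wz R a) = wz R (- a).
Proof.
move=> m1; apply: (mulfI (@wz_neq0 R m a m1)).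
by rewrite mulcJ_sq sq_wz mulrC wzN.
Qed.

Lemma wz_neq1 (R : realType) (m : nat) (a : 'Z_m) : (1 < m)%N -> a != 0 ->
  wz R a != 1.
Proof.
move=> m1 a0; rewrite /wz; apply: omega_neq1.
rewrite lt0n; apply/andP; split; last by apply: (@leq_trans (Zp_trunc m).+2); [exact: ltn_ord | rewrite Zp_cast].
by apply: contra a0 => /eqP h; apply/eqP; apply: val_inj.
Qed.

Lemma le_bigmax0 (R : realType) (I : eqType) (s : seq I) (F : I -> R) i :
  i \in s -> F i <= \big[Num.max/0]_(j <- s) F j.
Proof.
elim: s => // a s IH; rewrite in_cons big_cons => /orP [/eqP->|/IH h].
  by rewrite le_max lexx.
by rewrite le_max h orbT.
Qed.
Arguments le_bigmax0 {R I s} F {i}.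

Lemma le_sum1 (R : realType) (I : finType) (F : I -> R) i :
  (forall j, 0 <= F j) -> F i <= \sum_j F j.
Proof.
move=> F0; rewrite (bigD1 i) //= lerDl; exact: sumr_ge0.
Qed.

Definition fcons (T : Type) (n : nat) (a : T) (f : {ffun 'I_n -> T}) : {ffun 'I_n.+1 -> T} :=
  [ffun i => if unlift ord0 i is Some j then f j else a].
Arguments fcons {T n}.

Lemma fcons0 (T : Type) n (a : T) (f : {ffun 'I_n -> T}) : fcons a f ord0 = a.
Proof. by rewrite ffunE unlift_none. Qed.

Lemma fconsS (T : Type) n (a : T) (f : {ffun 'I_n -> T}) j : fcons a f (lift ord0 j) = f j.
Proof. by rewrite ffunE liftK. Qed.

Lemma sum_fcons (V : nmodType) (T : finType) n (F : {ffun 'I_n.+1 -> T} -> V) :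
  \sum_x F x = \sum_a \sum_(f : {ffun 'I_n -> T}) F (fcons a f).
Proof.
rewrite pair_big /=.
rewrite (reindex (fun p : T * {ffun 'I_n -> T} => fcons p.1 p.2)) //.
exists (fun x : {ffun 'I_n.+1 -> T} => (x ord0, [ffun j : 'I_n => x (lift ord0 j)])) => [[a f]|x] _ /=.
  by rewrite fcons0; congr (_, _); apply/ffunP => j; rewrite ffunE fconsS.
apply/ffunP => i; rewrite ffunE; case: unliftP => [j ->|->] //.
by rewrite ffunE.
Qed.

Lemma prod_fcons (V : comSemiRingType) (T : Type) n (P : T -> V) (a : T) (f : {ffun 'I_n -> T}) :
  \prod_(i < n.+1) P (fcons a f i) = P a * \prod_(i < n) P (f i).
Proof.
rewrite big_ord_recl fcons0; congr (_ * _); apply: eq_bigr => i _; by rewrite fconsS.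
Qed.

Lemma prod_fcons2 (V : comSemiRingType) (T U : Type) n (P : T -> U -> V) (a : T) (b : U)
  (f : {ffun 'I_n -> T}) (g : {ffun 'I_n -> U}) :
  \prod_(i < n.+1) P (fcons a f i) (fcons b g i) = P a b * \prod_(i < n) P (f i) (g i).
Proof.
rewrite big_ord_recl !fcons0; congr (_ * _); apply: eq_bigr => i _; by rewrite !fconsS.
Qed.

Section Coercive.
Variables (R : realType) (Sigma Gamma : finType) (m : nat).
Variables (mu : Sigma -> Gamma -> R) (t : Sigma -> Gamma -> 'Z_m).
Hypothesis m1 : (1 < m)%N.
Hypothesis mu0 : forall x y, 0 <= mu x y.
Hypothesis mu1 : \sum_x \sum_y mu x y = 1.
Hypothesis conn : game_connected mu.
Hypothesis val1 : game_value mu t < 1.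

Definition vv (f : Sigma -> R[i]) (g : Gamma -> R[i]) (v : Sigma + Gamma) :=
  match v with inl x => f x | inr y => g y end.

Definition Qf (f : Sigma -> R[i]) (g : Gamma -> R[i]) : R :=
  \sum_x \sum_y mu x y * sq (f x - wz R (t x y) * g y).

Definition kappa : R :=
  \sum_x \sum_y (if 0 < mu x y then (mu x y)^-1 else 0).

Lemma Qf_ge0 f g : 0 <= Qf f g.
Proof. by apply: sumr_ge0 => x _; apply: sumr_ge0 => y _; rewrite mulr_ge0 ?sq_ge0. Qed.

Lemma kappa_ge0 : 0 <= kappa.
Proof.
apply: sumr_ge0 => x _; apply: sumr_ge0 => y _.
by case: ifP => // h; rewrite invr_ge0 ltW.
Qed.

Lemma edge_err f g x y : 0 < mu x y ->
  sq (f x - wz R (t x y) * g y) <= kappa * Qf f g.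
Proof.
move=> mp.
have h1 : mu x y * sq (f x - wz R (t x y) * g y) <= Qf f g.
  rewrite /Qf (bigD1 x) //= (bigD1 y) //= -addrA lerDl.
  rewrite addr_ge0 //; apply: sumr_ge0 => ? _; rewrite ?mulr_ge0 ?sq_ge0 //.
  by apply: sumr_ge0 => ? _; rewrite ?mulr_ge0 ?sq_ge0.
have h2 : (mu x y)^-1 <= kappa.
  rewrite /kappa (bigD1 x) //= (bigD1 y) //= mp -addrA lerDl.
  rewrite addr_ge0 //; apply: sumr_ge0 => y' _; first by case: ifP => // h; rewrite invr_ge0 ltW.
  by apply: sumr_ge0 => y'' _; case: ifP => // h; rewrite invr_ge0 ltW.
have h3 : sq (f x - wz R (t x y) * g y) <= (mu x y)^-1 * Qf f g.
  by rewrite ler_pdivlMl // mulrC.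
apply: le_trans h3 _; apply: ler_wpM2r => //; exact: Qf_ge0.
Qed.


Lemma sqB2 (a e : R[i]) : sq (a - e) <= 2 * sq a + 2 * sq e.
Proof. by have := @sqD2 R a (- e); rewrite sqN. Qed.

Lemma prop_edge f g z u v (k : 'Z_m) (b : R) : supp_graph mu u v ->
  sq (vv f g u - wz R k * z) <= b ->
  exists k' : 'Z_m, sq (vv f g v - wz R k' * z) <= 2 * b + 2 * (kappa * Qf f g).
Proof.
case: u => [x|y]; case: v => [x'|y'] //= hmu hb.
- exists (k - t x y').
  set A := wz R (- t x y'); set W := wz R (t x y').
  have hw : A * W = 1 by rewrite /A /W wzN.
  have -> : g y' - wz R (k - t x y') * z =
    A * ((f x - wz R k * z) - (f x - W * g y')).
    rewrite wzD // -/A.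
    have -> : A * ((f x - wz R k * z) - (f x - W * g y')) = (A * W) * g y' - wz R k * A * z by ring.
    by rewrite hw mul1r.
  rewrite sqM sq_wz mul1r; apply: le_trans (sqB2 _ _) _.
  by rewrite lerD // ler_pM2l // edge_err.
- exists (t x' y + k).
  set W := wz R (t x' y).
  have -> : f x' - wz R (t x' y + k) * z = (f x' - W * g y) + W * (g y - wz R k * z).
    by rewrite wzD // -/W; ring.
  apply: le_trans (@sqD2 R _ _) _; rewrite sqM sq_wz mul1r addrC.
  by rewrite lerD // ler_pM2l // edge_err.
Qed.


Lemma prop_path f g z (p : seq (Sigma + Gamma)) u (k : 'Z_m) (b : R) : 0 <= b ->
  path (supp_graph mu) u p -> sq (vv f g u - wz R k * z) <= b ->
  exists k' : 'Z_m, sq (vv f g (last u p) - wz R k' * z) <=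
     4 ^+ size p * (b + kappa * Qf f g).
Proof.
have eta0 : 0 <= kappa * Qf f g by rewrite mulr_ge0 ?kappa_ge0 ?Qf_ge0.
elim: p u k b => [|w p IH] u k b b0 /=.
  by move=> _ h; exists k; apply: le_trans h _; rewrite expr0 mul1r lerDl.
case/andP=> huw hp hb.
have [k1 hk1] := prop_edge _ _ _ _ _ _ _ huw hb.
have b10 : 0 <= 2 * b + 2 * (kappa * Qf f g) by apply: addr_ge0; apply: mulr_ge0.
have [k2 hk2] := IH w k1 _ b10 hp hk1.
exists k2; apply: le_trans hk2 _.
rewrite exprSr -mulrA ler_wpM2l ?exprn_ge0 //; lra.
Qed.

Lemma all_vertices f g (v0 v : Sigma + Gamma) :
  exists k : 'Z_m, sq (vv f g v - wz R k * vv f g v0) <=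
     4 ^+ #|{: Sigma + Gamma}| * (kappa * Qf f g).
Proof.
have eta0 : 0 <= kappa * Qf f g by rewrite mulr_ge0 ?kappa_ge0 ?Qf_ge0.
have /connectP [p hp ->] := conn v0 v.
case: (shortenP hp) => p' hp' uq _.
have h0 : sq (vv f g v0 - wz R (0 : 'Z_m) * vv f g v0) <= 0.
  by rewrite /wz /= expr0 mul1r subrr sq0.
have [k hk] := prop_path _ _ _ _ _ _ _ (lexx 0) hp' h0.
exists k; apply: le_trans hk _; rewrite add0r ler_wpM2r // ler_eXn2l //.
have : (size (v0 :: p') <= #|{: Sigma + Gamma}|)%N.
  by rewrite -(card_uniqP uq) max_card.
  by move/ltnW.
lra.
Qed.


Definition gaminv : R := \sum_(a : 'Z_m | a != 0) (sq (wz R a - 1))^-1.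

Lemma sq_gt0 (z : R[i]) : z != 0 -> 0 < sq z.
Proof.
case: z => a b hz; rewrite /sq /= lt_def addr_ge0 ?sqr_ge0 // andbT.
apply: contra hz; rewrite paddr_eq0 ?sqr_ge0 // !sqrf_eq0 => /andP [/eqP -> /eqP ->].
by [].
Qed.

Lemma gaminv_ge0 : 0 <= gaminv.
Proof. by apply: sumr_ge0 => a _; rewrite invr_ge0 sq_ge0. Qed.

Lemma gam_bound (a : 'Z_m) : a != 0 -> 1 <= gaminv * sq (wz R a - 1).
Proof.
move=> a0.
have hp : 0 < sq (wz R a - 1) by rewrite sq_gt0 // subr_eq0 wz_neq1.
have : (sq (wz R a - 1))^-1 <= gaminv.
  rewrite /gaminv (bigD1 a) //= lerDl; apply: sumr_ge0 => b _.
  by rewrite invr_ge0 sq_ge0.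
by move/(ler_wpM2r (ltW hp)); rewrite mulVf // gt_eqF.
Qed.

Definition Dc : R := 4 ^+ #|{: Sigma + Gamma}|.

Lemma Dc_ge0 : 0 <= Dc.
Proof. by rewrite exprn_ge0. Qed.

Lemma win_one (f0 : {ffun Sigma -> 'Z_m}) (g0 : {ffun Gamma -> 'Z_m}) :
  (forall x y, 0 < mu x y -> f0 x + g0 y = t x y) -> False.
Proof.
move=> hw.
have hwin : win_prob mu t f0 g0 = 1.
  rewrite /win_prob -mu1; apply: eq_bigr => x _.
  rewrite big_mkcond /=; apply: eq_bigr => y _.
  case: ifP => // /negbT hc.
  have : ~~ (0 < mu x y) by apply: contra hc => /hw ->.
  by rewrite -leNgt => hle; apply/eqP; rewrite eq_le hle mu0.
have : 1 <= game_value mu t.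
  rewrite -hwin /game_value.
  apply: le_trans (le_bigmax0 _ (mem_index_enum f0)).
  exact: (le_bigmax0 _ (mem_index_enum g0)).
by rewrite leNgt val1.
Qed.

Lemma vertex_bound f g v0 :
  sq (vv f g v0) <= gaminv * (3 * (2 * Dc + 1)) * (kappa * Qf f g).
Proof.
set z := vv f g v0; set eta := kappa * Qf f g.
have eta0 : 0 <= eta by rewrite mulr_ge0 ?kappa_ge0 ?Qf_ge0.
rewrite leNgt; apply/negP => H.
pose k v := odflt 0 [pick k : 'Z_m | sq (vv f g v - wz R k * z) <= Dc * eta].
have hk v : sq (vv f g v - wz R (k v) * z) <= Dc * eta.
  rewrite /k; case: pickP => [k' hk' //|hn].
  have [k' hk'] := all_vertices f g v0 v.
  by move: (hn k'); rewrite hk'.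
apply: (@win_one [ffun x => k (inl x)] [ffun y => - k (inr y)]) => x y hxy.
rewrite !ffunE.
set kx := k (inl x); set ky := k (inr y).
case: (eqVneq (kx - ky) (t x y)) => // hne; exfalso.
pose a := kx - (t x y + ky).
have ha : a != 0.
  by apply: contra hne; rewrite /a opprD addrA addrAC subr_eq0.
have hkx := hk (inl x); have hky := hk (inr y).
rewrite -/kx /= in hkx; rewrite -/ky /= in hky.
set W := wz R (t x y).
have e1 : wz R kx * z - wz R (t x y + ky) * z =
   - (f x - wz R kx * z) + (f x - W * g y) + W * (g y - wz R ky * z).
  by rewrite wzD // -/W; ring.
have e2 : wz R kx * z - wz R (t x y + ky) * z = wz R (t x y + ky) * (wz R a - 1) * z.
  have hk' : kx = (t x y + ky) + a by rewrite /a addrC subrK.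
  rewrite {1}hk' wzD //; ring.
have hs : sq (wz R a - 1) * sq z <= 3 * (2 * Dc + 1) * eta.
  have <- : sq (wz R kx * z - wz R (t x y + ky) * z) = sq (wz R a - 1) * sq z.
    by rewrite e2 !sqM sq_wz mul1r.
  rewrite e1; apply: le_trans (@sqD3 R _ _ _) _.
  rewrite sqN sqM sq_wz mul1r -mulrA ler_wpM2l //.
  have := edge_err f g x y hxy; rewrite -/W -/eta => he.
  rewrite mulrDl mul1r -mulrA; lra.
have h1 : sq z <= gaminv * (sq (wz R a - 1) * sq z).
  by have := ler_wpM2r (@sq_ge0 R z) (gam_bound a ha); rewrite mul1r -mulrA.
have h2 : gaminv * (sq (wz R a - 1) * sq z) <= gaminv * (3 * (2 * Dc + 1) * eta).
  by rewrite ler_wpM2l ?gaminv_ge0.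
by move: H; rewrite -mulrA ltNge (le_trans h1 h2).
Qed.


Definition pX x := \sum_y mu x y.
Definition pY y := \sum_x mu x y.
Definition NX (f : Sigma -> R[i]) := \sum_x pX x * sq (f x).
Definition NY (g : Gamma -> R[i]) := \sum_y pY y * sq (g y).
Definition Bf (f : Sigma -> R[i]) (h : Gamma -> R[i]) : R[i] :=
  \sum_x \sum_y (mu x y)%:C * Tchar R t x y * f x * h y.

Lemma pX_ge0 x : 0 <= pX x. Proof. by apply: sumr_ge0. Qed.
Lemma pY_ge0 y : 0 <= pY y. Proof. by apply: sumr_ge0. Qed.
Lemma NX_ge0 f : 0 <= NX f.
Proof. by apply: sumr_ge0 => x _; rewrite mulr_ge0 ?pX_ge0 ?sq_ge0. Qed.
Lemma NY_ge0 g : 0 <= NY g.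
Proof. by apply: sumr_ge0 => x _; rewrite mulr_ge0 ?pY_ge0 ?sq_ge0. Qed.

Definition Cv : R := gaminv * (3 * (2 * Dc + 1)) * kappa.
Lemma Cv_ge0 : 0 <= Cv.
Proof. by rewrite /Cv !mulr_ge0 ?gaminv_ge0 ?kappa_ge0 ?Dc_ge0 // addr_ge0 ?mulr_ge0 ?Dc_ge0. Qed.

Lemma NX_coercive f g : NX f <= Cv * Qf f g.
Proof.
rewrite /NX -[Cv * _]mul1r -mu1 mulr_suml; apply: ler_sum => x _.
apply: ler_wpM2l; first exact: pX_ge0.
by have /= h := vertex_bound f g (inl x); rewrite /Cv -mulrA.
Qed.

Lemma NY_coercive f g : NY g <= Cv * Qf f g.
Proof.
rewrite /NY -[Cv * _]mul1r -mu1 exchange_big mulr_suml; apply: ler_sum => y _.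
apply: ler_wpM2l; first exact: pY_ge0.
by have /= h := vertex_bound f g (inr y); rewrite /Cv -mulrA.
Qed.

Lemma Q_identity f h :
  Qf f (fun y => conjc (h y)) = NX f + NY h - 2 * Rc (Bf f h).
Proof.

have e : forall x y, mu x y * sq (f x - wz R (t x y) * conjc (h y)) =
   mu x y * sq (f x) + mu x y * sq (h y) - 2 * Rc ((mu x y)%:C * Tchar R t x y * f x * h y).
  move=> x y; rewrite sqB_expand sqM sq_wz mul1r sq_conj rmorphM /= conjcK.
  rewrite conj_wz // -Tchar_wz //.
  have -> : (mu x y)%:C * Tchar R t x y * f x * h y =
    (mu x y)%:C * (f x * (Tchar R t x y * h y)) by ring.
  rewrite ReCM; ring.
have e1 : NX f = \sum_x \sum_y mu x y * sq (f x).
  by rewrite /NX; apply: eq_bigr => x _; rewrite /pX mulr_suml.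
have e2 : NY h = \sum_x \sum_y mu x y * sq (h y).
  by rewrite /NY /pY; under eq_bigr => y _ do rewrite mulr_suml; rewrite exchange_big.
have e3 : 2 * Rc (Bf f h) =
    \sum_x \sum_y 2 * Rc ((mu x y)%:C * Tchar R t x y * f x * h y).
  rewrite /Bf Re_sum mulr_sumr; apply: eq_bigr => x _.
  by rewrite Re_sum mulr_sumr.
rewrite e1 e2 e3 -big_split -sumrB /Qf; apply: eq_bigr => x _.
rewrite -big_split -sumrB; apply: eq_bigr => y _; exact: e.
Qed.



Definition r1 : R := 1 - (2 * Cv + 1)^-1.

Lemma r1_ge0 : 0 <= r1.
Proof.
have hC := Cv_ge0.
have hp : 0 < 2 * Cv + 1 by lra.
rewrite /r1 subr_ge0 invf_le1 //; lra.
Qed.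

Lemma r1_lt1 : r1 < 1.
Proof.
have hC := Cv_ge0.
have hp : 0 < 2 * Cv + 1 by lra.
by rewrite /r1 ltrBlDr ltrDl invr_gt0.
Qed.

Lemma NY_conj h : NY (fun y => conjc (h y)) = NY h.
Proof. by apply: eq_bigr => y _; rewrite sq_conj. Qed.

Lemma Re_B_bound f h : 2 * Rc (Bf f h) <= r1 * (NX f + NY h).
Proof.
have hq := Q_identity f h.
set Q := Qf f _ in hq.
have hQ0 : 0 <= Q by exact: Qf_ge0.
have h1 := NX_coercive f (fun y => conjc (h y)).
have h2 := NY_coercive f (fun y => conjc (h y)); rewrite NY_conj in h2.
rewrite -/Q in h1 h2.
have hC := Cv_ge0.
have hpos : 0 < 2 * Cv + 1 by lra.
have h3 : (NX f + NY h) / (2 * Cv + 1) <= Q.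
  rewrite ler_pdivrMr //; nra.
have -> : 2 * Rc (Bf f h) = NX f + NY h - Q by rewrite hq; ring.
rewrite /r1 mulrBl mul1r mulrC lerB //.
Qed.

Lemma Bf_scale f h (c : R[i]) : Bf (fun x => c * f x) h = c * Bf f h.
Proof.
rewrite /Bf mulr_sumr; apply: eq_bigr => x _; rewrite mulr_sumr.
by apply: eq_bigr => y _; ring.
Qed.

Lemma NX_scale f (c : R[i]) : NX (fun x => c * f x) = sq c * NX f.
Proof.
rewrite /NX mulr_sumr; apply: eq_bigr => x _; rewrite sqM; ring.
Qed.

Lemma B_bound f h : sq (Bf f h) <= r1 ^+ 2 * NX f * NY h.
Proof.
set S := sq (Bf f h).
have -> : r1 ^+ 2 * NX f * NY h = (r1 * NX f) * (r1 * NY h) by ring.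
apply: disc; rewrite ?sq_ge0 ?mulr_ge0 ?r1_ge0 ?NX_ge0 ?NY_ge0 //.
move=> l l0.
pose c := l%:C * conjc (Bf f h).
have := Re_B_bound (fun x => c * f x) h.
rewrite Bf_scale NX_scale /c -mulrA (mulrC (conjc _)) mulcJ_sq -rmorphM /= sqM sq_conj sqC.
rewrite -/S => hh.
have -> : 2 * l * S = 2 * (l * S) by ring.
have -> : l ^+ 2 * S * (r1 * NX f) + r1 * NY h = r1 * (l ^+ 2 * S * NX f + NY h) by ring.
exact: hh.
Qed.


Lemma pX0_mu a b : pX a = 0 -> mu a b = 0.
Proof.
move=> /eqP; rewrite /pX psumr_eq0 => [/allP h|y _]; last exact: mu0.
by apply/eqP; apply: h; rewrite mem_index_enum.
Qed.

Lemma mu_split a b : mu a b = pX a * (mu a b / pX a).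
Proof.
case: (eqVneq (pX a) 0) => [h|h]; first by rewrite h mul0r pX0_mu.
by rewrite mulrC divfK.
Qed.

Definition Kc a b : R[i] := (mu a b / pX a)%:C * Tchar R t a b.
Definition Aop (h : Gamma -> R[i]) (a : Sigma) : R[i] := \sum_b Kc a b * h b.

Lemma B_Aop f h : Bf f h = \sum_x (pX x)%:C * f x * Aop h x.
Proof.
apply: eq_bigr => x _; rewrite /Aop mulr_sumr; apply: eq_bigr => y _.
by rewrite {1}(mu_split x y) rmorphM /Kc /=; ring.
Qed.

Lemma NX_conj f : NX (fun x => conjc (f x)) = NX f.
Proof. by apply: eq_bigr => x _; rewrite sq_conj. Qed.

Lemma Aop_bound h : NX (Aop h) <= r1 ^+ 2 * NY h.
Proof.
set u := Aop h.
have e : NX u = Rc (Bf (fun x => conjc (u x)) h).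
  rewrite B_Aop Re_sum; apply: eq_bigr => x _.
  by rewrite -/u -mulrA (mulrC (conjc _)) mulcJ_sq -rmorphM.
have hb := B_bound (fun x => conjc (u x)) h; rewrite NX_conj in hb.
have h2 : NX u ^+ 2 <= r1 ^+ 2 * NX u * NY h.
  rewrite {1}e; apply: le_trans (@Re_le_sq R _) _; apply: le_trans hb _.
  by rewrite mulrAC.
have hN := NX_ge0 u.
case: (eqVneq (NX u) 0) => [->|hn].
  by rewrite mulr_ge0 ?exprn_ge0 ?r1_ge0 ?NY_ge0.
have hp : 0 < NX u by rewrite lt_def hn hN.
rewrite -(ler_pM2r hp); apply: le_trans h2 _.
by rewrite mulrAC.
Qed.


Definition Kn {n} (x : {ffun 'I_n -> Sigma}) (y : {ffun 'I_n -> Gamma}) : R[i] :=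
  \prod_(i < n) Kc (x i) (y i).
Definition An {n} (G : {ffun 'I_n -> Gamma} -> R[i]) (x : {ffun 'I_n -> Sigma}) : R[i] :=
  \sum_y Kn x y * G y.
Definition PXn {n} (x : {ffun 'I_n -> Sigma}) : R := \prod_(i < n) pX (x i).
Definition PYn {n} (y : {ffun 'I_n -> Gamma}) : R := \prod_(i < n) pY (y i).
Definition NXn {n} (F : {ffun 'I_n -> Sigma} -> R[i]) : R := \sum_x PXn x * sq (F x).
Definition NYn {n} (G : {ffun 'I_n -> Gamma} -> R[i]) : R := \sum_y PYn y * sq (G y).

Lemma PXn_ge0 n x : 0 <= @PXn n x.
Proof. by apply: prodr_ge0 => i _; exact: pX_ge0. Qed.
Lemma PYn_ge0 n y : 0 <= @PYn n y.
Proof. by apply: prodr_ge0 => i _; exact: pY_ge0. Qed.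
Lemma NYn_ge0 n G : 0 <= @NYn n G.
Proof. by apply: sumr_ge0 => y _; rewrite mulr_ge0 ?PYn_ge0 ?sq_ge0. Qed.

Lemma An_cons n G a f :
  @An n.+1 G (fcons a f) = Aop (fun b => @An n (fun g => G (fcons b g)) f) a.
Proof.
rewrite /An sum_fcons /Aop; apply: eq_bigr => b _.
rewrite mulr_sumr; apply: eq_bigr => g _.
by rewrite /Kn prod_fcons2 mulrA.
Qed.

Lemma card_ffun0 (T : finType) : #|{: {ffun 'I_0 -> T}}| = 1%N.
Proof. by rewrite card_ffun card_ord expn0. Qed.

Lemma sum_ffun0 (V : nmodType) (T : finType) (F : {ffun 'I_0 -> T} -> V) :
  exists x0, \sum_x F x = F x0.
Proof.
have /card_gt0P [x0 _] : (0 < #|{: {ffun 'I_0 -> T}}|)%N by rewrite card_ffun0.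
exists x0; rewrite (bigD1 x0) //=.
rewrite big1 ?addr0 // => x.
have -> : x = x0 by apply/ffunP => -[].
by rewrite eqxx.
Qed.
Arguments sum_ffun0 {V T} F.

Lemma tensor_bound n G : NXn (@An n G) <= (r1 ^+ 2) ^+ n * NYn G.
Proof.
have r0 : 0 <= r1 ^+ 2 by rewrite exprn_ge0 ?r1_ge0.
elim: n G => [|n IH] G.
  rewrite expr0 mul1r /NXn /NYn /An.
  under eq_bigr => x _ do rewrite /PXn big_ord0 mul1r.
  under [X in _ <= X]eq_bigr => y _ do rewrite /PYn big_ord0 mul1r.
  under eq_bigr => x _ do under eq_bigr => y _ do rewrite /Kn big_ord0 mul1r.
  have [x0 ->] := sum_ffun0 (fun x : {ffun 'I_0 -> Sigma} => sq (\sum_y G y)).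
  have [y0 ->] := sum_ffun0 G.
  have [y1 ->] := sum_ffun0 (fun y => sq (G y)).
  by have -> : y0 = y1 by apply/ffunP => -[].
pose Gb b := fun g : {ffun 'I_n -> Gamma} => G (fcons b g).
pose H f := fun b => An (Gb b) f.
have e1 : NXn (An G) = \sum_f PXn f * NX (Aop (H f)).
  rewrite /NXn sum_fcons exchange_big; apply: eq_bigr => f _.
  rewrite /NX mulr_sumr; apply: eq_bigr => a _.
  by rewrite /PXn prod_fcons An_cons mulrA (mulrC (pX a)).
have e2 : NYn G = \sum_b pY b * NYn (Gb b).
  rewrite /NYn sum_fcons; apply: eq_bigr => b _.
  rewrite mulr_sumr; apply: eq_bigr => g _.
  by rewrite /PYn prod_fcons mulrA.
have e3 : \sum_f PXn f * (r1 ^+ 2 * NY (H f)) =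
    r1 ^+ 2 * \sum_b pY b * NXn (An (Gb b)).
  rewrite /NY /NXn mulr_sumr; under eq_bigr => f _ do rewrite !mulr_sumr.
  rewrite exchange_big; apply: eq_bigr => b _.
  rewrite !mulr_sumr; apply: eq_bigr => f _; rewrite /H; ring.
rewrite e1 e2; apply: (@le_trans _ _ (\sum_f PXn f * (r1 ^+ 2 * NY (H f)))).
  by apply: ler_sum => f _; apply: ler_wpM2l; [exact: PXn_ge0 | exact: Aop_bound].
rewrite e3 [(r1 ^+ 2) ^+ n.+1]exprS -mulrA; apply: ler_wpM2l => //.
rewrite mulr_sumr; apply: ler_sum => b _.
rewrite mulrCA; apply: ler_wpM2l; [exact: pY_ge0 | exact: IH].
Qed.


Lemma corr_identity n (F : {ffun 'I_n -> Sigma} -> R[i]) (G : {ffun 'I_n -> Gamma} -> R[i]) :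
  xor_correlation mu t F G = \sum_x (PXn x)%:C * F x * An G x.
Proof.
rewrite /xor_correlation; apply: eq_bigr => x _; rewrite /An mulr_sumr.
apply: eq_bigr => y _.
have hK : Kn x y = (\prod_i (mu (x i) (y i) / pX (x i)))%:C *
    \prod_i Tchar R t (x i) (y i) by rewrite /Kn /Kc big_split /= rmorph_prod.
have hm : \prod_i mu (x i) (y i) = PXn x * \prod_i (mu (x i) (y i) / pX (x i)).
  by rewrite /PXn -big_split /=; apply: eq_bigr => i _; exact: mu_split.
by rewrite hK hm rmorphM /=; ring.
Qed.

Lemma sum_pX : \sum_a pX a = 1.
Proof. exact: mu1. Qed.
Lemma sum_pY : \sum_b pY b = 1.
Proof. by rewrite /pY exchange_big. Qed.

Lemma sum_PXn n : \sum_x @PXn n x = 1.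
Proof.
rewrite /PXn -(bigA_distr_bigA (fun (i : 'I_n) (a : Sigma) => pX a)) /=.
by rewrite big1 // => i _; rewrite sum_pX.
Qed.
Lemma sum_PYn n : \sum_y @PYn n y = 1.
Proof.
rewrite /PYn -(bigA_distr_bigA (fun (i : 'I_n) (b : Gamma) => pY b)) /=.
by rewrite big1 // => i _; rewrite sum_pY.
Qed.

Lemma final_sq n (F : {ffun 'I_n -> Sigma} -> R[i]) (G : {ffun 'I_n -> Gamma} -> R[i]) :
  (forall x, sq (F x) <= 1) -> (forall y, sq (G y) <= 1) ->
  sq (xor_correlation mu t F G) <= (r1 ^+ 2) ^+ n.
Proof.
move=> hF hG; rewrite corr_identity.
apply: le_trans (@CS R _ _ _ _ (@PXn_ge0 n)) _.
have hNF : \sum_x PXn x * sq (F x) <= 1.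
  rewrite -(sum_PXn n); apply: ler_sum => x _.
  by rewrite -[X in _ <= X]mulr1 ler_wpM2l ?PXn_ge0.
have hNG : NYn G <= 1.
  rewrite -(sum_PYn n); apply: ler_sum => y _.
  by rewrite -[X in _ <= X]mulr1 ler_wpM2l ?PYn_ge0.
have hT := tensor_bound n G.
have r0 : 0 <= (r1 ^+ 2) ^+ n by rewrite !exprn_ge0 ?r1_ge0.
have hA0 : 0 <= NXn (An G).
  by apply: sumr_ge0 => x _; rewrite mulr_ge0 ?PXn_ge0 ?sq_ge0.
rewrite -/(NXn (An G)).
apply: le_trans (ler_wpM2r hA0 hNF) _; rewrite mul1r.
apply: le_trans hT _.
by rewrite -[X in _ <= X]mulr1 ler_wpM2l.
Qed.

End Coercive.

Lemma sq_le1 (R : realType) (z : R[i]) : `|z| <= 1 -> sq z <= 1.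
Proof.
rewrite normc_def -[1 : R[i]]/((1 : R)%:C) lecR -/(sq z) => h.
rewrite -(sqr_sqrtr (@sq_ge0 R z)).
have h0 : 0 <= Num.sqrt (sq z) by exact: sqrtr_ge0.
by rewrite expr2; nra.
Qed.

Theorem lemma2p2 (R : realType) (Sigma Gamma : finType) (m : nat)
  (mu : Sigma -> Gamma -> R) (t : Sigma -> Gamma -> 'Z_m) :
  (1 < m)%N ->
  is_distr mu ->
  game_connected mu ->
  game_value mu t < 1 ->
  exists c : R, 0 < c /\
    forall (n : nat) (F : {ffun 'I_n -> Sigma} -> R[i]) (G : {ffun 'I_n -> Gamma} -> R[i]),
      (forall x, `|F x| <= 1) ->
      (forall y, `|G y| <= 1) ->
      `|xor_correlation mu t F G| <= (2 `^ (- (c * n%:R)))%:C.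
Proof.
move=> m1 [mu0 mu1] conn val1.
have hfin := @final_sq R Sigma Gamma m mu t m1 mu0 mu1 conn val1.
have r0 := r1_ge0 R Sigma Gamma m mu.
have rl := r1_lt1 R Sigma Gamma m mu.
set r := r1 R Sigma Gamma m mu in hfin r0 rl.
have rr0 : 0 <= r ^+ 2 by rewrite exprn_ge0.
have rr1 : r ^+ 2 < 1 by rewrite expr2; nra.
set s := (1 + r ^+ 2) / 2.
have s0 : 0 < s by rewrite /s; lra.
have s1 : s < 1 by rewrite /s; lra.
have rs : r ^+ 2 <= s by rewrite /s; lra.
have ls : ln s < 0 by apply: ln_lt0; rewrite s0 s1.
have l2 : 0 < ln (2 : R) by apply: ln_gt0; lra.
exists (- ln s / (2 * ln 2)); split.
  by rewrite divr_gt0 ?oppr_gt0 // mulr_gt0.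
move=> n F G hF hG.
have hE := hfin n F G (fun x => @sq_le1 R _ (hF x)) (fun y => @sq_le1 R _ (hG y)).
set E := xor_correlation mu t F G in hE *.
set p := 2 `^ _.
have p0 : 0 <= p by exact: powR_ge0.
have hp : p ^+ 2 = s ^+ n.
  rewrite /p /powR (negbTE (lt0r_neq0 _)); last by lra.
  rewrite -expRM_natl.
  have -> : 2%:R * (- (- ln s / (2 * ln 2) * n%:R) * ln 2) = n%:R * ln s.
    by field; rewrite gt_eqF.
  by rewrite expRM_natl lnK // posrE.
rewrite normc_def -/(sq E) lecR.
have : sq E <= p ^+ 2.
  rewrite hp; apply: le_trans hE _.
  by rewrite lerXn2r // nnegrE ltW.
move/ler_wsqrtr; rewrite sqrtr_sqr ger0_norm //.
Qed.
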